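(* Let $X$ be a bouquet digraph (a single vertex) with $d$ loops, $G$ a finite abelian group, $\alpha:E_X\to G$ a voltage assignment, and suppose $Y=X(G,\alpha)$ is strongly connected. Let $F$ be an algebraically closed field of characteristic zero. Then the base change $\mathcal{A}_F:FV_Y\to FV_Y$ of the adjacency operator of $Y$ is diagonalizable, and in particular $\delta(Y)=0$.
   Context: Digraph $X=(V_X,E_X)$ with incidence $e\mapsto(o(e),t(e))$; strongly connected means a directed path exists between any two distinct vertices. $X(G,\alpha)$ has vertices $V_X\times G$, edges $E_X\times G$, $o(e,\sigma)=(o(e),\sigma)$, $t(e,\sigma)=(t(e),\sigma\alpha(e))$. $\mathcal{A}_Y(w)=\sum_{o(\varepsilon)=w}t(\varepsilon)$ on $\mathbb{Z}V_Y$, $FV_Y=F\otimes\mathbb{Z}V_Y$. $\mathrm{BF}(Y)=\mathrm{coker}(\mathcal{I}-\mathcal{A}_Y)$, $g_Y(u)=\det(\mathcal{I}-\mathcal{A}_Yu)$, $r_Y=\mathrm{ord}_{u=1}g_Y$, $\delta(Y)=r_Y-\mathrm{rank}_{\mathbb{Z}}\mathrm{BF}(Y)$. *)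

(* Defs.v *)
From HB Require Import structures.
From mathcomp Require Import all_boot all_order all_algebra all_fingroup.
Set Implicit Arguments. Unset Strict Implicit. Unset Printing Implicit Defensive.
Import Order.TTheory GRing.Theory Num.Theory.
Local Open Scope ring_scope.

(* Bouquet digraph X: one vertex, edge set E_X = 'I_d (d loops).
   Derived digraph Y = X(G, alpha): vertices V_X x G = G (identified with gT),
   edges E_X x G = 'I_d * gT, o(e,s) = s, t(e,s) = s * alpha e. *)

Section Derived.
Variables (gT : finGroupType) (d : nat) (alpha : 'I_d -> gT).

Definition der_edge : rel gT := fun s t => [exists e : 'I_d, s * alpha e == t]%g.

Definition der_strongly_connected : Prop :=
  forall s t : gT, s != t -> connect der_edge s t.

(* Adjacency matrix over R
   with mathcomp's row-vector convention: A i j = #{edges e with o = i, t = j},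
   so that (basis vector of w) *m A = \sum_{o(eps)=w} t(eps), i.e. A_Y. *)
Definition der_adj (R : pzRingType) : 'M[R]_#|gT| :=
  \matrix_(i, j) (#|[set e : 'I_d | (enum_val i * alpha e == enum_val j)%g]|)%:R.

Definition der_g : {poly int} :=
  \det (1%:M - 'X *: map_mx polyC (der_adj int)).

(* r_Y = ord_{u=1} g_Y (computed in Q[u]; g_Y(0) = 1 so g_Y <> 0) *)
Definition der_r : nat := mup 1 (map_poly (intr : int -> rat) der_g).

(* rank_Z BF(Y) = rank_Z coker(I - A_Y) = |V_Y| - rank_Q (I - A_Y) *)
Definition der_rankBF : nat :=
  (#|gT| - \rank (map_mx (intr : int -> rat) (1%:M - der_adj int)))%N.

Definition der_delta : int := (der_r%:Z - der_rankBF%:Z)%R.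

End Derived.

(* Main.v *)
Require Import Defs.
From HB Require Import structures.
From mathcomp Require Import all_boot all_order all_algebra all_fingroup all_field.
Import Order.TTheory GRing.Theory Num.Theory.
Local Open Scope ring_scope.
Set Implicit Arguments. Unset Strict Implicit. Unset Printing Implicit Defensive.

Lemma diag_perm (F : closedFieldType) (hF : [pchar F] =i pred0) n (s : 'S_n) :
  diagonalizable (perm_mx s : 'M[F]_n).
Proof.
case: n s => [|n] s.
  exists 1%:M; first by rewrite unitmx1.
  by apply/is_diag_mxP => -[].
apply/diagonalizableP.
have N0 : (0 < #[s]%g)%N := order_gt0 s.
have [r Hr] := closed_field_poly_normal ('X^#[s]%g - 1 : {poly F}).
rewrite (monicP (monic_Xn_sub_1 _ N0)) scale1r in Hr.
exists r.
  rewrite -separable_prod_XsubC -Hr; apply: separable_Xn_sub_1.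
  by rewrite ((pcharf0P _).1 hF) -lt0n.
rewrite -Hr; apply: mxminpoly_min.
have pX k : perm_mx (s ^+ k) = (perm_mx s : 'M[F]_n.+1) ^+ k.
  elim: k => [|k IH]; first by rewrite expg0 perm_mx1 expr0.
  by rewrite expgS perm_mxM IH exprS mulmxE.
rewrite rmorphB /= rmorphXn /= horner_mx_X rmorph1 -pX expg_order perm_mx1 subrr.
done.
Qed.

Lemma codiag_sum (F : fieldType) n (As : seq 'M[F]_n) :
  codiagonalizable As -> diagonalizable (\sum_(A <- As) A).
Proof.
case=> P Pu /allP H; exists P => //.
rewrite /similar_to /conjmx mulmx_sumr mulmx_suml.
apply/is_diag_mxP => i j ij; rewrite summxE big1_seq // => A /andP[_ AAs].
by have /is_diag_mxP := H A AAs; apply.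
Qed.

Section Der.
Variables (gT : finGroupType) (d : nat) (alpha : 'I_d -> gT).

Definition sigf (g : gT) (i : 'I_#|gT|) : 'I_#|gT| := enum_rank (enum_val i * g)%g.
Lemma sigf_inj g : injective (sigf g).
Proof.
move=> i j /enum_rank_inj /mulIg; exact: enum_val_inj.
Qed.
Definition sig g : 'S_#|gT| := perm (@sigf_inj g).

Lemma sigM g h : sig (g * h)%g = (sig g * sig h)%g.
Proof.
apply/permP => i; rewrite permM !permE /sigf enum_rankK mulgA //.
Qed.

Lemma adjE (R : pzRingType) : der_adj alpha R = \sum_(e < d) perm_mx (sig (alpha e)).
Proof.
apply/matrixP => i j; rewrite !mxE summxE -sum1_card natr_sum big_mkcond /=.
apply: eq_bigr => e _; rewrite !mxE inE permE /sigf.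
rewrite -(can_eq enum_valK) enum_rankK.
by case: eqP.
Qed.


Lemma diag_adj (F : closedFieldType) (hF : [pchar F] =i pred0) :
  abelian [set: gT] -> diagonalizable (der_adj alpha F).
Proof.
move=> hab.
have hc : forall x y : gT, (x * y = y * x)%g.
  by move=> x y; apply: (centsP hab); rewrite inE.
have cd : codiagonalizable [seq (perm_mx (sig (alpha e)) : 'M[F]_#|gT|) | e <- enum 'I_d].
  apply/codiagonalizableP; split.
    move=> A B /mapP[e _ ->] /mapP[e' _ ->].
    by rewrite /comm_mx -!perm_mxM -!sigM hc.
  move=> A /mapP[e _ ->]; exact: diag_perm.
by have := codiag_sum cd; rewrite big_map big_enum /= -adjE.
Qed.
End Der.
Lemma mup_map (F : fieldType) (R : fieldType) (f : {rmorphism F -> R}) x p :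
  p != 0 -> mup (f x) (map_poly f p) = mup x p.
Proof.
move=> p0; have fp0 : map_poly f p != 0 by rewrite map_poly_eq0.
have E k : map_poly f (('X - x%:P) ^+ k) = ('X - (f x)%:P) ^+ k.
  by rewrite rmorphXn rmorphB /= map_polyX map_polyC.
apply/eqP; rewrite eqn_leq; apply/andP; split.
  by rewrite mup_geq // -(dvdp_map f) E -mup_geq.
by rewrite mup_geq // -E (dvdp_map f) -mup_geq.
Qed.

Lemma mup_prod (R : fieldType) (I : Type) (s : seq I) (f : I -> {poly R}) x :
  (forall i, f i != 0) -> mup x (\prod_(i <- s) f i) = (\sum_(i <- s) mup x (f i))%N.
Proof.
move=> nz; elim: s => [|i s IH]; first by rewrite !big_nil mupNroot // root1.
rewrite !big_cons mupM ?IH ?nz //.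
by rewrite prodf_seq_neq0; elim: s {IH} => //= j s ->; rewrite nz.
Qed.

Lemma rank_diag (F : fieldType) n (D : 'rV[F]_n) :
  \rank (diag_mx D) = (\sum_(i < n) (D ord0 i != 0%R))%N.
Proof.
elim: n D => [|n IH] D.
  by rewrite big_ord0; apply/eqP; rewrite -leqn0 rank_leq_row.
rewrite big_ord_recl.
have -> : \rank (diag_mx D) = \rank (diag_mx (row_mx (lsubmx (D : 'rV_(1+n))) (rsubmx (D : 'rV_(1+n))))) by rewrite hsubmxK.
rewrite diag_mx_row rank_diag_block_mx IH rank_rV.
congr (_ + _)%N.
  have L : lshift n (ord0 : 'I_1) = ord0 by apply: val_inj.
  congr negb; apply/eqP/eqP => [/matrixP/(_ ord0 ord0)|H].
    by rewrite !mxE /= mulr1n L.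
  by apply/matrixP => i j; rewrite !ord1 !mxE /= mulr1n L H.
apply: eq_bigr => i _; rewrite !mxE /=; congr (D _ _ != 0); exact: val_inj.
Qed.
Lemma adj_map (gT : finGroupType) d (alpha : 'I_d -> gT) (R : comUnitRingType) :
  map_mx (intr : int -> R) (der_adj alpha int) = der_adj alpha R.
Proof. by apply/matrixP => i j; rewrite !mxE rmorph_nat. Qed.


Lemma delta0 (gT : finGroupType) d (alpha : 'I_d -> gT) :
  diagonalizable (der_adj alpha algC) -> der_delta alpha = 0.
Proof.
set A := der_adj alpha algC => -[P Pu Hd].
have hA := adj_map alpha algC; rewrite -/A in hA.
move: Hd; rewrite /similar_to /conjmx pinvmxE //.
set B := P *m A *m invmx P => /is_diag_mxP Hd.
have AE : A = invmx P *m B *m P.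
  by rewrite /B !mulmxA mulVmx // mul1mx -mulmxA mulVmx // mulmx1.
set D := \row_i B i i.
have BE : B = diag_mx D.
  apply/matrixP => i j; rewrite [RHS]mxE [D _ _]mxE.
  by case: eqVneq => [->|ij]; [rewrite mulr1n | rewrite mulr0n Hd].
have E : (ratr \o intr) =1 (intr : int -> algC) by move=> z; exact: ratr_int.
have M : map_mx (map_poly intr) (1%:M - 'X *: map_mx polyC (der_adj alpha int))
    = 1%:M - 'X *: map_mx polyC A :> 'M[{poly algC}]_#|gT|.
  apply/matrixP => i j; rewrite -hA !mxE rmorphB rmorphMn rmorph1 rmorphM /=.
  by rewrite map_polyX map_polyC.
have gK : map_poly (ratr : rat -> algC) (map_poly intr (der_g alpha))
    = \prod_i (1 - 'X * (D 0 i)%:P).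
  rewrite -map_poly_comp (eq_map_poly E) /der_g -det_map_mx M.
  have PP : map_mx polyC (invmx P) *m map_mx polyC P = 1%:M.
    by rewrite -map_mxM mulVmx // map_mx1.
  rewrite AE BE !map_mxM.
  set CPi := map_mx polyC (invmx P); set CP := map_mx polyC P.
  set CD := map_mx polyC (diag_mx D).
  have -> : 1%:M - 'X *: (CPi *m CD *m CP) = CPi *m (1%:M - 'X *: CD) *m CP.
    by rewrite mulmxBr mulmxBl mulmx1 PP -scalemxAr -scalemxAl.
  rewrite !det_mulmx mulrAC -det_mulmx PP det1 mul1r.
  have -> : 1%:M - 'X *: CD = diag_mx (\row_i (1 - 'X * (D 0 i)%:P)).
    apply/matrixP => i j; rewrite !mxE; case: eqVneq => _.
      by rewrite !mulr1n.
    by rewrite !mulr0n mulr0 subr0.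
  by rewrite det_diag; apply: eq_bigr => i _; rewrite mxE.
have nz i : (1 - 'X * (D 0 i)%:P : {poly algC}) != 0.
  apply/eqP => /(congr1 (horner^~ 0)); rewrite /= !hornerE => /eqP.
  by rewrite subr0 oner_eq0.
have mu i : mup 1 (1 - 'X * (D 0 i)%:P) = (D 0 i == 1 : nat).
  case: eqVneq => [->|ne].
    rewrite mulr1 -opprB -mulN1r mupMr; last by rewrite /root !hornerE oppr_eq0 oner_eq0.
    by rewrite -polyC1 -['X - _]expr1 mup_XsubCX eqxx.
  by rewrite mupNroot // /root !hornerE subr_eq0 eq_sym.
have hr : der_r alpha = (\sum_i (D ord0 i == 1%R))%N.
  have q0 : map_poly (intr : int -> rat) (der_g alpha) != 0.
    by rewrite -(map_poly_eq0 (ratr : {rmorphism rat -> algC})) gK; apply/prodf_neq0 => i _; exact: nz.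
  rewrite /der_r -(mup_map (ratr : {rmorphism rat -> algC})) // rmorph1 gK mup_prod //; apply: eq_bigr => i _; exact: mu.
have hk : der_rankBF alpha = (#|gT| - \sum_i (D ord0 i != 1%R))%N.
  rewrite /der_rankBF -(mxrank_map (ratr : {rmorphism rat -> algC})) -map_mx_comp (eq_map_mx _ E).
  have -> : map_mx intr (1%:M - der_adj alpha int) = 1%:M - A :> 'M[algC]_#|gT|.
    by rewrite -hA; apply/matrixP => i j; rewrite !mxE rmorphB rmorphMn rmorph1.
  rewrite AE BE.
  have -> : 1%:M - invmx P *m diag_mx D *m P = invmx P *m diag_mx (\row_i (1 - D 0 i)) *m P.
    have -> : diag_mx (\row_i (1 - D 0 i)) = 1%:M - diag_mx D.
      by apply/matrixP => i j; rewrite !mxE; case: eqVneq => _; rewrite ?mulr1n ?mulr0n ?subr0.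
    by rewrite mulmxBr mulmxBl mulmx1 mulVmx.
  rewrite mxrankMfree ?row_free_unit //.
  set M1 := diag_mx _.
  have -> : \rank (invmx P *m M1) = \rank M1.
    apply/eqP; rewrite eqn_leq mxrankM_maxr /=.
    by rewrite -{1}(mulKVmx Pu M1) mxrankM_maxr.
  rewrite rank_diag; congr (_ - _)%N; apply: eq_bigr => i _.
  by rewrite mxE subr_eq0 eq_sym.
have hs : (\sum_i (D ord0 i == 1%R) + \sum_i (D ord0 i != 1%R))%N = #|gT|.
  rewrite -big_split /= (eq_bigr (fun _ => 1%N)); last by move=> i _; case: (D ord0 i == 1%R).
  by rewrite sum_nat_const card_ord muln1.
have sub_lem : forall a b n, (a + b = n)%N -> (n - b = a)%N by move=> a b n <-; rewrite addnK.
by rewrite /der_delta hr hk (sub_lem _ _ _ hs) subrr.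
Qed.

Unset Implicit Arguments. Set Strict Implicit. Set Printing Implicit Defensive.

Theorem proposition4p7 (gT : finGroupType) (d : nat) (alpha : 'I_d -> gT)
  (F : closedFieldType) :
  abelian [set: gT] ->
  der_strongly_connected alpha ->
  [pchar F] =i pred0 ->
  diagonalizable (der_adj alpha F) /\ der_delta alpha = 0.
Proof.
move=> hab _ hF; split; first exact: diag_adj.
by apply: delta0; apply: diag_adj => //; exact: Cpchar.
Qed.
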